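(* Let $G=G_0*_HG_1$ be a nondegenerate free product with amalgamation with Bass-Serre tree $T$ and boundary $\partial T$. The following are equivalent: (i) $\operatorname{int}G=\{e\}$; (ii) the action of $G$ on $T$ (i.e. on its edge set $G/H$) is strongly faithful; (iii) the action of $G$ on $\partial T$ is strongly faithful; (iv) the action of $G$ on $\partial T$ is topologically free.
   Context: The amalgam is nondegenerate if $([G_0:H]-1)([G_1:H]-1)\ge2$. For $j=0,1$ and $k\ge1$ let $T_{j,k}=\{x_0\cdots x_{k-1}:x_i\in G_{i+j\bmod2}\setminus H\}$, $T_{j,0}=H$, $C_{j,k}=\bigcap_{g\in T_{j,k}}gHg^{-1}$, $K_j=\bigcap_{k\ge0}C_{j,k}$. $\operatorname{int}G$ denotes the normal closure of $K_0\cup K_1$ in $G$. The Bass-Serre tree $T$ has vertex set $G/G_0\sqcup G/G_1$ and edge set $G/H$, the edge $gH$ joining $gG_0$ and $gG_1$; $G$ acts by left multiplication. A ray is a sequence of vertices $(x_n)_{n\ge0}$ with $x_n,x_{n+1}$ adjacent and $x_{n+2}\ne x_n$; two rays are cofinal if they eventually agree up to a shift of index; $\partial T$ is the set of cofinality classes, with the topology generated by the sets $Z_B(e)$, for oriented edges $e$ from vertex $s$ to vertex $r$, consisting of classes of rays that pass through $s$ and then $r$ consecutively. An action of $G$ on a set $X$ is strongly faithful if for every finite $F\subseteq G\setminus\{e\}$ there is $x\in X$ with $fx\ne x$ for all $f\in F$. An action on a topological space is topologically free if for every $g\ne e$ its fixed-point set has empty interior. *)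

(* Defs.v *)
From Stdlib Require Import List.
Set Implicit Arguments.

Record Group := {
  gcar :> Type;
  gmul : gcar -> gcar -> gcar;
  ginv : gcar -> gcar;
  gone : gcar;
  gmulA : forall x y z, gmul x (gmul y z) = gmul (gmul x y) z;
  gmul1 : forall x, gmul gone x = x;
  gmulV : forall x, gmul (ginv x) x = gone }.

Arguments gmul {g}.
Arguments ginv {g}.
Arguments gone {g}.

Definition is_subgroup {G : Group} (S : G -> Prop) : Prop :=
  S gone /\ (forall x y, S x -> S y -> S (gmul x y)) /\ (forall x, S x -> S (ginv x)).

Definition is_normal {G : Group} (N : G -> Prop) : Prop :=
  is_subgroup N /\ (forall g x, N x -> N (gmul (gmul g x) (ginv g))).

Definition is_hom_on {G K : Group} (S : G -> Prop) (f : G -> K) : Prop :=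
  forall x y, S x -> S y -> f (gmul x y) = gmul (f x) (f y).

(* G is the free product of its subgroups G0 and G1 amalgamated over
   H := G0 ∩ G1: the inclusions form a pushout in the category of groups. *)
Definition is_amalgam {G : Group} (G0 G1 : G -> Prop) : Prop :=
  is_subgroup G0 /\ is_subgroup G1 /\
  forall (K : Group) (f0 f1 : G -> K),
    is_hom_on G0 f0 -> is_hom_on G1 f1 ->
    (forall h, G0 h -> G1 h -> f0 h = f1 h) ->
    (exists phi : G -> K, is_hom_on (fun _ => True) phi /\
        (forall x, G0 x -> phi x = f0 x) /\ (forall x, G1 x -> phi x = f1 x)) /\
    (forall phi psi : G -> K,
        is_hom_on (fun _ => True) phi -> is_hom_on (fun _ => True) psi ->
        (forall x, G0 x -> phi x = f0 x) -> (forall x, G1 x -> phi x = f1 x) ->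
        (forall x, G0 x -> psi x = f0 x) -> (forall x, G1 x -> psi x = f1 x) ->
        forall x, phi x = psi x).

Unset Implicit Arguments.
Section Amalgam.
Variables (G : Group) (G0 G1 : G -> Prop).

Definition Hsub (x : G) : Prop := G0 x /\ G1 x.
Definition Gj (j : bool) : G -> Prop := if j then G1 else G0.

(* [G_j : H] >= 2 and [G_j : H] >= 3 (indices may be infinite) *)
Definition index_ge2 (S : G -> Prop) : Prop := exists a, S a /\ ~ Hsub a.
Definition index_ge3 (S : G -> Prop) : Prop :=
  exists a b, S a /\ S b /\ ~ Hsub a /\ ~ Hsub b /\ ~ Hsub (gmul (ginv a) b).

(* ([G0:H]-1)([G1:H]-1) >= 2 *)
Definition nondegenerate : Prop :=
  index_ge2 G0 /\ index_ge2 G1 /\ (index_ge3 G0 \/ index_ge3 G1).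

Fixpoint Tword (j : bool) (k : nat) (g : G) : Prop :=
  match k with
  | 0 => g = gone
  | S k' => exists x y, Gj j x /\ ~ Hsub x /\ Tword (negb j) k' y /\ g = gmul x y
  end.

Definition Tset (j : bool) (k : nat) (g : G) : Prop :=
  match k with 0 => Hsub g | _ => Tword j k g end.

(* C_{j,k} = ∩_{g ∈ T_{j,k}} g H g^{-1} *)
Definition Cset (j : bool) (k : nat) (x : G) : Prop :=
  forall g, Tset j k g -> Hsub (gmul (gmul (ginv g) x) g).

Definition Kset (j : bool) (x : G) : Prop := forall k, Cset j k x.

(* int G = normal closure of K_0 ∪ K_1 *)
Definition intG (x : G) : Prop :=
  forall N : G -> Prop, is_normal N ->
    (forall y, Kset false y \/ Kset true y -> N y) -> N x.

Definition strongly_faithful (X : Type) (dom : X -> Prop) (eqX : X -> X -> Prop)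
  (act : G -> X -> X) : Prop :=
  forall F : list G, (forall f, In f F -> f <> gone) ->
    exists x, dom x /\ forall f, In f F -> ~ eqX (act f x) x.

(* Bass-Serre tree: vertices (j, a) represent the cosets a G_j *)
Definition vertex : Type := (bool * G)%type.
Definition veq (v w : vertex) : Prop :=
  fst v = fst w /\ Gj (fst v) (gmul (ginv (snd v)) (snd w)).
Definition vact (g : G) (v : vertex) : vertex := (fst v, gmul g (snd v)).
(* adjacency: the two cosets (one of G0, one of G1) share an element g,
   i.e. are the endpoints of the edge gH *)
Definition adj (v w : vertex) : Prop :=
  fst v <> fst w /\ exists g, veq v (fst v, g) /\ veq w (fst w, g).

Definition is_ray (x : nat -> vertex) : Prop :=
  forall n, adj (x n) (x (S n)) /\ ~ veq (x (S (S n))) (x n).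
Definition cofinal (x y : nat -> vertex) : Prop :=
  exists m k, forall n, veq (x (n + m)) (y (n + k)).
Definition ray_act (g : G) (x : nat -> vertex) : nat -> vertex :=
  fun n => vact g (x n).

(* Z_B(e) for the oriented edge e = gH from g G_j to g G_{1-j} *)
Definition Zset (j : bool) (g : G) (x : nat -> vertex) : Prop :=
  exists y, is_ray y /\ cofinal x y /\
    exists n, veq (y n) (j, g) /\ veq (y (S n)) (negb j, g).

Inductive gen_open : ((nat -> vertex) -> Prop) -> Prop :=
  | go_basic j g : gen_open (Zset j g)
  | go_top : gen_open (fun _ => True)
  | go_inter U V : gen_open U -> gen_open V -> gen_open (fun x => U x /\ V x)
  | go_union (S : ((nat -> vertex) -> Prop) -> Prop) :
      (forall U, S U -> gen_open U) -> gen_open (fun x => exists U, S U /\ U x).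

Definition topologically_free : Prop :=
  forall g : G, g <> gone ->
    ~ exists U, gen_open U /\ (exists x, is_ray x /\ U x) /\
        (forall x, is_ray x -> U x -> cofinal (ray_act g x) x).

End Amalgam.

(* Main.v *)
Require Import Defs.
From Stdlib Require Import List Bool Arith Lia ClassicalEpsilon FunctionalExtensionality PropExtensionality ProofIrrelevance.
Import ListNotations.

Arguments gmul1 {g}.
Arguments gmulA {g}.
Arguments gmulV {g}.
Section GroupLemmas.
Context {G : Group}.
Local Notation "x * y" := (gmul x y).
Local Notation e := (@gone G).

Lemma mulgV (x : G) : x * ginv x = e.
Proof.
  rewrite <- (gmul1 (x * ginv x)).
  rewrite <- (gmulV (ginv x)) at 1.
  rewrite <- gmulA. rewrite (gmulA (ginv x) x (ginv x)). rewrite gmulV, gmul1.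
  apply gmulV.
Qed.

Lemma mulg1 (x : G) : x * e = x.
Proof. rewrite <- (gmulV x), gmulA, mulgV, gmul1; reflexivity. Qed.

Lemma mulKg (x y : G) : ginv x * (x * y) = y.
Proof. rewrite gmulA, gmulV, gmul1; reflexivity. Qed.
Lemma mulVKg (x y : G) : x * (ginv x * y) = y.
Proof. rewrite gmulA, mulgV, gmul1; reflexivity. Qed.
Lemma mulgK (x y : G) : (x * y) * ginv y = x.
Proof. rewrite <- gmulA, mulgV, mulg1; reflexivity. Qed.
Lemma mulgVK (x y : G) : (x * ginv y) * y = x.
Proof. rewrite <- gmulA, gmulV, mulg1; reflexivity. Qed.

Lemma inv_uniq (x y : G) : x * y = e -> ginv x = y.
Proof. intro Hxy. rewrite <- (mulg1 (ginv x)), <- Hxy, mulKg. reflexivity. Qed.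
Lemma invgK (x : G) : ginv (ginv x) = x.
Proof. apply inv_uniq. apply gmulV. Qed.
Lemma invgM (x y : G) : ginv (x * y) = ginv y * ginv x.
Proof. apply inv_uniq. rewrite gmulA, mulgK, mulgV. reflexivity. Qed.
Lemma invg1 : ginv e = e.
Proof. apply inv_uniq. apply gmul1. Qed.
Lemma mulg_canl (x y z : G) : x * y = x * z -> y = z.
Proof. intro E. rewrite <- (mulKg x y), E, mulKg. reflexivity. Qed.
Lemma mulg_canr (x y z : G) : y * x = z * x -> y = z.
Proof. intro E. rewrite <- (mulgK y x), E, mulgK. reflexivity. Qed.
Lemma invg_inj (x y : G) : ginv x = ginv y -> x = y.
Proof. intro E. rewrite <- (invgK x), E, invgK. reflexivity. Qed.
End GroupLemmas.

#[export] Hint Rewrite @gmul1 @mulg1 @gmulV @mulgV @mulKg @mulVKg @mulgK @mulgVK @invgK @invgM @invg1 : grp.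
Ltac gs := repeat (rewrite ?gmulA; autorewrite with grp); try reflexivity.

Lemma sub1 {G : Group} (S : G -> Prop) : is_subgroup S -> S gone.
Proof. intros [A _]; exact A. Qed.
Lemma subM {G : Group} (S : G -> Prop) : is_subgroup S -> forall x y, S x -> S y -> S (gmul x y).
Proof. intros [_ [A _]]; exact A. Qed.
Lemma subV {G : Group} (S : G -> Prop) : is_subgroup S -> forall x, S x -> S (ginv x).
Proof. intros [_ [_ A]]; exact A. Qed.
Lemma subVr {G : Group} (S : G -> Prop) : is_subgroup S -> forall x, S (ginv x) -> S x.
Proof. intros HS x Hx. rewrite <- (invgK x). apply subV; auto. Qed.
Lemma subMl {G : Group} (S : G -> Prop) : is_subgroup S -> forall x y, S x -> S (gmul x y) -> S y.
Proof. intros HS x y Hx Hxy. rewrite <- (mulKg x y). apply subM; auto. apply subV; auto. Qed.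
Lemma subMr {G : Group} (S : G -> Prop) : is_subgroup S -> forall x y, S y -> S (gmul x y) -> S x.
Proof. intros HS x y Hy Hxy. rewrite <- (mulgK x y). apply subM; auto. apply subV; auto. Qed.

Section Amal.
Variable G : Group.
Variables G0 G1 : G -> Prop.
Hypothesis Ham : is_amalgam G0 G1.
Hypothesis Hnd : nondegenerate G G0 G1.
Local Notation H := (Hsub G G0 G1).
Local Notation Gj := (Gj G G0 G1).
Local Notation "x * y" := (gmul x y).
Local Notation e := (@gone G).

Lemma subG j : is_subgroup (Gj j).
Proof. destruct Ham as [A [B _]]; destruct j; simpl; auto. Qed.
Lemma subH : is_subgroup H.
Proof.
  destruct Ham as [A [B _]]. unfold Hsub. split; [|split].
  - split; apply sub1; auto.
  - intros x y [] []; split; apply subM; auto.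
  - intros x []; split; apply subV; auto.
Qed.
Lemma HM x y : H x -> H y -> H (x * y). Proof. apply (subM _ subH). Qed.
Lemma HV x : H x -> H (ginv x). Proof. apply (subV _ subH). Qed.
Lemma HVr x : H (ginv x) -> H x. Proof. apply (subVr _ subH). Qed.
Lemma H1 : H e. Proof. apply (sub1 _ subH). Qed.
Lemma HMl x y : H x -> H (x * y) -> H y. Proof. apply (subMl _ subH). Qed.
Lemma HMr x y : H y -> H (x * y) -> H x. Proof. apply (subMr _ subH). Qed.
Lemma GM j x y : Gj j x -> Gj j y -> Gj j (x * y). Proof. apply (subM _ (subG j)). Qed.
Lemma GV j x : Gj j x -> Gj j (ginv x). Proof. apply (subV _ (subG j)). Qed.
Lemma GVr j x : Gj j (ginv x) -> Gj j x. Proof. apply (subVr _ (subG j)). Qed.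
Lemma Ge j : Gj j e. Proof. apply (sub1 _ (subG j)). Qed.
Lemma GMl j x y : Gj j x -> Gj j (x * y) -> Gj j y. Proof. apply (subMl _ (subG j)). Qed.
Lemma GMr j x y : Gj j y -> Gj j (x * y) -> Gj j x. Proof. apply (subMr _ (subG j)). Qed.
Lemma HG j x : H x -> Gj j x.
Proof. intros []; destruct j; simpl; auto. Qed.
Lemma GH j x : Gj j x -> Gj (negb j) x -> H x.
Proof. destruct j; simpl; intros; split; auto. Qed.

Definition letter := (bool * G)%type.
Fixpoint redw (l : list letter) : Prop :=
  match l with
  | [] => True
  | (k,x)::l' => Gj k x /\ ~ H x /\ redw l' /\
      match l' with [] => True | (k',_)::_ => k' = negb k end
  end.
Fixpoint prod (l : list letter) : G :=
  match l with [] => e | (_,x)::l' => x * prod l' end.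
Definition ftype (l : list letter) := fst (hd (true, e) l).
Definition ltype (l : list letter) := fst (last l (true, e)).
Definition compat (l1 l2 : list letter) : Prop :=
  match l2 with [] => True | (k,_)::_ =>
    match l1 with [] => True | _ => k = negb (ltype l1) end end.

Lemma prod_app l1 l2 : prod (l1 ++ l2) = prod l1 * prod l2.
Proof. induction l1 as [|[k x] l IH]; simpl. - gs. - rewrite IH. gs. Qed.

Lemma ltype_cons a l : l <> [] -> ltype (a :: l) = ltype l.
Proof. destruct l; [congruence|]. intros _. reflexivity. Qed.

Lemma redw_app l1 l2 : redw l1 -> redw l2 -> compat l1 l2 -> redw (l1 ++ l2).
Proof.
  induction l1 as [|[k x] l IH]; simpl; auto.
  intros [A [B [C D]]] R2 Cp. split; [exact A|]. split; [exact B|]. split.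
  - apply IH; auto. destruct l2 as [|[k2 x2] l2]; simpl; auto.
    destruct l as [|a l]; auto.
  - destruct l as [|[k' x'] l].
    + simpl. destruct l2 as [|[k2 x2] l2]; simpl; auto.
    + simpl. exact D.
Qed.

Definition invrev (l : list letter) : list letter :=
  map (fun p => (fst p, ginv (snd p))) (rev l).

Lemma invrev_cons a l : invrev (a :: l) = invrev l ++ [(fst a, ginv (snd a))].
Proof. unfold invrev. simpl. rewrite map_app. reflexivity. Qed.

Lemma prod_invrev l : prod (invrev l) = ginv (prod l).
Proof.
  induction l as [|[k x] l IH].
  - simpl. rewrite invg1; reflexivity.
  - rewrite invrev_cons, prod_app, IH. simpl. gs.
Qed.

Lemma last_app_single {A} (l : list A) a d : last (l ++ [a]) d = a.
Proof. induction l as [|b l IH]; simpl; auto. destruct (l ++ [a]) eqn:E.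
  - destruct l; discriminate. - exact IH. Qed.

Lemma ftype_invrev l : l <> [] -> ftype (invrev l) = ltype l.
Proof.
  unfold ftype, ltype, invrev. intros _. rewrite <- rev_involutive with (l := l) at 2.
  destruct (rev l) as [|a r] eqn:E; simpl; auto.
  rewrite last_app_single. reflexivity.
Qed.

Lemma ltype_invrev l : l <> [] -> ltype (invrev l) = ftype l.
Proof.
  destruct l as [|a l]; [congruence|]. intros _. rewrite invrev_cons. unfold ltype.
  rewrite last_app_single. reflexivity.
Qed.

Lemma redw_single k x : Gj k x -> ~ H x -> redw [(k,x)].
Proof. simpl; auto. Qed.

Lemma redw_tail a l : redw (a :: l) -> redw l.
Proof. destruct a; simpl; tauto. Qed.

Lemma redw_app_inv l1 l2 : redw (l1 ++ l2) -> redw l1 /\ redw l2.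
Proof.
  induction l1 as [|[k x] l IH]; simpl; auto.
  intros [A [B [C D]]]. destruct (IH C) as [R1 R2]. repeat split; auto.
  destruct l as [|[k' x'] l]; simpl in *; auto.
Qed.

Lemma redw_snoc l k x : redw l -> Gj k x -> ~ H x -> (l = [] \/ k = negb (ltype l)) -> redw (l ++ [(k,x)]).
Proof.
  intros R A B C. apply redw_app; simpl; auto. destruct l; auto. destruct C; [discriminate|auto].
Qed.

Lemma redw_invrev l : redw l -> redw (invrev l).
Proof.
  induction l as [|[k x] l IH]; simpl; auto.
  intros [A [B [C D]]]. rewrite invrev_cons. simpl. apply redw_snoc; auto.
  - apply subV; auto. apply subG.
  - intro Hx. apply B. apply subVr; auto. apply subH.
  - destruct l as [|[k' x'] l]; [left; reflexivity|]. right.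
    rewrite ltype_invrev by discriminate. simpl. subst k'. destruct k; reflexivity.
Qed.

Lemma redw_absorb h k x l : H h -> redw ((k,x)::l) -> redw ((k, h * x)::l).
Proof.
  simpl. intros Hh [A [B [C D]]]. repeat split; auto.
  - apply subM; auto. apply subG. apply HG; auto.
  - intro E. apply B. apply (subMl _ subH h x); auto.
Qed.

Definition P (j : bool) (t : G) : Prop :=
  exists l, redw l /\ l <> [] /\ ftype l = j /\ H (ginv (prod l) * t).

Lemma P_Hl j h t : H h -> P j t -> P j (h * t).
Proof.
  intros Hh [[|[k x] l] [R [N [F Ht]]]]; [congruence|].
  exists ((k, h*x)::l). split; [apply redw_absorb; auto|]. split; [discriminate|]. split; [exact F|].
  simpl in *. gs. rewrite invgM in Ht. exact Ht.
Qed.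

Lemma P_Hr j h t : H h -> P j t -> P j (t * h).
Proof.
  intros Hh [l [R [N [F Ht]]]]. exists l. split; [auto|]. split; [auto|]. split; [auto|]. rewrite gmulA. apply HM; auto.
Qed.

Lemma P_prod l : redw l -> l <> [] -> P (ftype l) (prod l).
Proof. intros R N. exists l. split; [auto|]. split; [auto|]. split; [auto|]. gs. apply H1. Qed.

Lemma CONC l u : redw l -> l <> [] -> (H u \/ P (negb (ltype l)) u) -> P (ftype l) (prod l * u).
Proof.
  intros R N [Hu | [v [Rv [Nv [Fv Hv]]]]].
  - apply P_Hr; auto. apply P_prod; auto.
  - exists (l ++ v). split; [apply redw_app; auto|]. 
    + destruct v as [|[k x] v]; [congruence|]. destruct l; [congruence|]. simpl in Fv |- *. exact Fv.
    + split. { destruct l; [congruence|]; discriminate. }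
      split. { destruct l; [congruence|]; reflexivity. }
      rewrite prod_app. rewrite invgM. gs. exact Hv.
Qed.


Definition dec (P : Prop) := excluded_middle_informative P.

Definition rep (a : G) : G := epsilon (inhabits e) (fun r => H (ginv a * r)).
Lemma rep_spec a : H (ginv a * rep a).
Proof. unfold rep. apply epsilon_spec. exists a. gs. apply H1. Qed.
Lemma rep_eq a b : H (ginv a * b) -> rep a = rep b.
Proof.
  intro Hab. unfold rep. f_equal. apply functional_extensionality. intro r.
  apply propositional_extensionality. split; intro Hr.
  - replace (ginv b * r) with (ginv (ginv a * b) * (ginv a * r)) by gs. apply HM; [apply HV|]; auto.
  - replace (ginv a * r) with ((ginv a * b) * (ginv b * r)) by gs. apply HM; auto.
Qed.
Lemma rep_idem a : rep (rep a) = rep a.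
Proof. symmetry. apply rep_eq. apply rep_spec. Qed.
Lemma rep_specV a : H (ginv (rep a) * a).
Proof. replace (ginv (rep a) * a) with (ginv (ginv a * rep a)) by gs. apply HV, rep_spec. Qed.
Lemma rep_G j a : Gj j a -> Gj j (rep a).
Proof. intro Ha. replace (rep a) with (a * (ginv a * rep a)) by gs. apply GM; auto. apply HG, rep_spec. Qed.
Lemma rep_notH a : ~ H a -> ~ H (rep a).
Proof. intros Na Hr. apply Na. replace a with (rep a * (ginv (rep a) * a)) by gs. apply HM; auto. apply rep_specV. Qed.

Fixpoint valid (l : list letter) : Prop :=
  match l with
  | [] => True
  | (k,x)::l' => Gj k x /\ ~ H x /\ rep x = x /\ valid l' /\
      match l' with [] => True | (k',_)::_ => k' = negb k end
  end.

Fixpoint hmul (g : G) (l : list letter) : list letter :=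
  match l with
  | [] => []
  | (k,r)::l' => (k, rep (g * r)) :: hmul (ginv (rep (g * r)) * (g * r)) l'
  end.

Lemma hmul_types g l : map fst (hmul g l) = map fst l.
Proof. revert g; induction l as [|[k r] l IH]; intro g; simpl; auto. rewrite IH; auto. Qed.

Definition nsj (j : bool) (l : list letter) : Prop :=
  match l with [] => True | (k,_)::_ => k = negb j end.

Lemma head_types (l1 l2 : list letter) j : map fst l1 = map fst l2 -> nsj j l2 -> nsj j l1.
Proof. destruct l1 as [|[]], l2 as [|[]]; simpl; try discriminate; auto. intros E; injection E; intros; subst; auto. Qed.

Lemma hmul_valid g l : H g -> valid l -> valid (hmul g l).
Proof.
  revert g; induction l as [|[k r] l IH]; intros g Hg; simpl; auto.
  intros [A [B [C [D E]]]].
  assert (Gk : Gj k (g * r)) by (apply GM; auto; apply HG; auto).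
  assert (Nk : ~ H (g * r)) by (intro X; apply B; apply (HMl g r); auto).
  split; [apply rep_G; auto|]. split; [apply rep_notH; auto|]. split; [apply rep_idem|].
  split. { apply IH; auto. apply rep_specV. }
  destruct l as [|[k' r'] l]; simpl; auto.
Qed.

Lemma hmul_e l : valid l -> hmul e l = l.
Proof.
  induction l as [|[k r] l IH]; simpl; auto. intros [A [B [C [D E]]]].
  rewrite gmul1, C. gs. rewrite IH; auto.
Qed.

Lemma hmul_hmul g g' l : H g -> H g' -> valid l -> hmul g (hmul g' l) = hmul (g * g') l.
Proof.
  revert g g'; induction l as [|[k r] l IH]; intros g g' Hg Hg' V; simpl; auto.
  destruct V as [A [B [C [D E]]]].
  assert (R : rep (g * rep (g' * r)) = rep (g * g' * r)).
  { apply rep_eq. replace (ginv (g * rep (g' * r)) * (g * g' * r)) with (ginv (rep (g' * r)) * (g' * r)) by gs.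
    apply rep_specV. }
  rewrite R. f_equal. rewrite IH; auto.
  - f_equal. rewrite <- R. gs.
  - replace (ginv (rep (g * g' * r)) * (g * rep (g' * r))) with (ginv (ginv (g * rep (g' * r)) * rep (g * rep (g' * r)))) by (rewrite R; gs).
    apply HV, rep_spec.
  - apply rep_specV.
Qed.

Definition push (j : bool) (b : G) (l : list letter) : list letter :=
  if dec (H b) then hmul b l else (j, rep b) :: hmul (ginv (rep b) * b) l.

Definition act (j : bool) (a : G) (l : list letter) : list letter :=
  match l with
  | (k,r)::l' => if Bool.eqb k j then push j (a * r) l' else push j a l
  | [] => push j a []
  end.

Lemma push_valid j b l : Gj j b -> valid l -> nsj j l -> valid (push j b l).
Proof.
  intros Gb V N. unfold push. destruct (dec (H b)) as [Hb|Nb].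
  - apply hmul_valid; auto.
  - simpl. split; [apply rep_G; auto|]. split; [apply rep_notH; auto|]. split; [apply rep_idem|].
    split. { apply hmul_valid; auto. apply rep_specV. }
    pose proof (hmul_types (ginv (rep b) * b) l) as T.
    destruct (hmul (ginv (rep b) * b) l) as [|[k' r'] l'] eqn:Eh; auto.
    destruct l as [|[k r] l]; simpl in T; try discriminate. injection T; intros; subst. exact N.
Qed.

Lemma act_valid j a l : Gj j a -> valid l -> valid (act j a l).
Proof.
  intros Ga V. destruct l as [|[k r] l].
  - apply push_valid; simpl; auto.
  - simpl. destruct (Bool.eqb k j) eqn:Ek.
    + apply Bool.eqb_prop in Ek. subst k. destruct V as [A [B [C [D E]]]].
      apply push_valid; auto. all: try (apply GM; auto). all: try (destruct l as [|[]]; simpl; auto).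
    + apply push_valid; auto. simpl. destruct k, j; simpl in *; congruence.
Qed.

Lemma push_hmul j c u l : Gj j c -> H u -> valid l -> push j c (hmul u l) = push j (c * u) l.
Proof.
  intros Gc Hu V. unfold push. destruct (dec (H c)) as [Hc|Nc]; destruct (dec (H (c * u))) as [Hcu|Ncu].
  - apply hmul_hmul; auto.
  - exfalso. apply Ncu. apply HM; auto.
  - exfalso. apply Nc. apply (HMr c u); auto.
  - assert (R : rep c = rep (c * u)) by (apply rep_eq; gs; auto).
    rewrite <- R. f_equal. rewrite hmul_hmul; auto.
    + f_equal. gs.
    + apply rep_specV.
Qed.

Lemma act_push j a b l : Gj j a -> Gj j b -> valid l -> nsj j l -> act j a (push j b l) = push j (a * b) l.
Proof.
  intros Ga Gb V N. unfold push at 1. destruct (dec (H b)) as [Hb|Nb].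
  - rewrite <- push_hmul; auto.
    pose proof (hmul_types b l) as T.
    destruct (hmul b l) as [|[k r] l'] eqn:Eh; simpl; auto.
    destruct l as [|[k0 r0] l]; simpl in T; try discriminate. injection T; intros; subst.
    simpl in N. subst k0. destruct j; simpl; reflexivity.
  - simpl. rewrite Bool.eqb_reflx. rewrite push_hmul; auto.
    + f_equal. gs.
    + apply GM; auto. apply rep_G; auto.
    + apply rep_specV.
Qed.

Lemma act_mul j a b l : Gj j a -> Gj j b -> valid l -> act j (a * b) l = act j a (act j b l).
Proof.
  intros Ga Gb V. destruct l as [|[k r] l].
  - simpl. rewrite act_push; simpl; auto.
  - simpl. destruct (Bool.eqb k j) eqn:Ek.
    + apply Bool.eqb_prop in Ek. subst k. destruct V as [A [B [C [D E]]]].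
      rewrite act_push; auto. all: try (apply GM; auto). all: try (destruct l as [|[]]; simpl; auto).
      all: try (f_equal; gs).
    + rewrite act_push; auto. simpl. destruct k, j; simpl in *; congruence.
Qed.

Lemma act_e j l : valid l -> act j e l = l.
Proof.
  intros V. destruct l as [|[k r] l].
  - unfold act, push. destruct (dec (H e)); auto. exfalso; auto using H1.
  - simpl. destruct (Bool.eqb k j) eqn:Ek.
    + apply Bool.eqb_prop in Ek. subst k. destruct V as [A [B [C [D E]]]].
      unfold push. rewrite gmul1. destruct (dec (H r)); [contradiction|]. rewrite C. gs. rewrite hmul_e; auto.
    + unfold push. destruct (dec (H e)) as [_|N]; [|exfalso; auto using H1].
      change (hmul e ((k,r)::l) = (k,r)::l). apply hmul_e. exact V.
Qed.

Lemma act_H j h l : H h -> valid l -> act j h l = hmul h l.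
Proof.
  intros Hh V. destruct l as [|[k r] l].
  - unfold act, push. destruct (dec (H h)); [reflexivity|contradiction].
  - simpl. destruct (Bool.eqb k j) eqn:Ek.
    + apply Bool.eqb_prop in Ek. subst k. destruct V as [A [B [C [D E]]]].
      unfold push. destruct (dec (H (h * r))) as [X|_]; [|reflexivity].
      exfalso. apply B. apply (HMl h r); auto.
    + unfold push. destruct (dec (H h)); [reflexivity|contradiction].
Qed.

Lemma act_len j a l : Gj j a -> ~ H a -> nsj j l -> exists l', act j a l = (j, rep a) :: l' /\ length l' = length l.
Proof.
  intros Ga Na N. destruct l as [|[k r] l].
  - simpl. unfold push. destruct (dec (H a)); [contradiction|]. eexists; split; [reflexivity|]. reflexivity.
  - simpl in N. subst k. simpl. replace (Bool.eqb (negb j) j) with false by (destruct j; reflexivity).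
    unfold push. destruct (dec (H a)); [contradiction|]. eexists; split; [reflexivity|].
    rewrite <- (length_map fst), hmul_types. simpl. rewrite length_map. reflexivity.
Qed.

Definition X := { l : list letter | valid l }.
Lemma X_ext (x y : X) : proj1_sig x = proj1_sig y -> x = y.
Proof. destruct x, y; simpl; intro E; subst. f_equal. apply proof_irrelevance. Qed.

Definition Perm := { p : (X -> X) * (X -> X) | (forall x, fst p (snd p x) = x) /\ (forall x, snd p (fst p x) = x) }.
Lemma Perm_ext (p q : Perm) : (forall x, fst (proj1_sig p) x = fst (proj1_sig q) x) ->
  (forall x, snd (proj1_sig p) x = snd (proj1_sig q) x) -> p = q.
Proof.
  destruct p as [[f g] Hp], q as [[f' g'] Hq]; simpl; intros E1 E2.
  apply functional_extensionality in E1. apply functional_extensionality in E2. subst.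
  f_equal. apply proof_irrelevance.
Qed.

Definition pmul (p q : Perm) : Perm.
Proof.
  refine (exist _ (fun x => fst (proj1_sig p) (fst (proj1_sig q) x), fun x => snd (proj1_sig q) (snd (proj1_sig p) x)) _).
  destruct p as [[f g] [A B]], q as [[f' g'] [C D]]; simpl. split; intro x.
  - rewrite C, A; auto. - rewrite B, D; auto.
Defined.
Definition pinv (p : Perm) : Perm.
Proof.
  refine (exist _ (snd (proj1_sig p), fst (proj1_sig p)) _).
  destruct p as [[f g] [A B]]; simpl. split; auto.
Defined.
Definition pone : Perm.
Proof. refine (exist _ (fun x => x, fun x => x) _). simpl. split; auto. Defined.

Definition PermG : Group.
Proof.
  refine (@Build_Group Perm pmul pinv pone _ _ _).
  - intros; apply Perm_ext; intro; reflexivity.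
  - intros; apply Perm_ext; intro; reflexivity.
  - intros [[f g] [A B]]; apply Perm_ext; intro; simpl; auto.
Defined.

Definition Xact (j : bool) (a : G) (x : X) : X :=
  match dec (Gj j a) with
  | left Ha => exist _ (act j a (proj1_sig x)) (act_valid j a _ Ha (proj2_sig x))
  | right _ => x
  end.

Lemma Xact_mul j a b x : Gj j a -> Gj j b -> Xact j (a * b) x = Xact j a (Xact j b x).
Proof.
  intros Ga Gb. unfold Xact.
  destruct (dec (Gj j (a * b))) as [Gab|N]; [|exfalso; apply N, GM; auto].
  destruct (dec (Gj j b)) as [Gb'|N]; [|contradiction].
  destruct (dec (Gj j a)) as [Ga'|N]; [|contradiction].
  apply X_ext. simpl. apply act_mul; auto. apply (proj2_sig x).
Qed.

Lemma Xact_inv j a x : Xact j a (Xact j (ginv a) x) = x.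
Proof.
  destruct (dec (Gj j a)) as [Ga|Na].
  - rewrite <- Xact_mul; auto. 2: apply GV; auto. rewrite mulgV.
    unfold Xact. destruct (dec (Gj j e)) as [He|N]; [|exfalso; apply N, Ge; auto].
    apply X_ext. simpl. apply act_e. apply (proj2_sig x).
  - assert (Nb : ~ Gj j (ginv a)) by (intro Z; apply Na; apply GVr; auto).
    unfold Xact. destruct (dec (Gj j (ginv a))); [contradiction|]. destruct (dec (Gj j a)); [contradiction|]. auto.
Qed.

Definition fperm (j : bool) (a : G) : PermG.
Proof.
  refine (exist _ (Xact j a, Xact j (ginv a)) _). simpl. split; intro x.
  - apply Xact_inv.
  - pose proof (Xact_inv j (ginv a) x) as Z; rewrite invgK in Z; exact Z.
Defined.

Lemma fperm_hom j : is_hom_on (Gj j) (fperm j).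
Proof.
  intros a b Ga Gb. apply Perm_ext; intro x; simpl.
  - apply Xact_mul; auto.
  - rewrite invgM. apply Xact_mul; apply GV; auto.
Qed.

Lemma Xact_H j h x : H h -> proj1_sig (Xact j h x) = hmul h (proj1_sig x).
Proof.
  intro Hh. unfold Xact. destruct (dec (Gj j h)) as [Hh2|N]; [|exfalso; apply N, HG; auto].
  simpl. apply act_H; auto. apply (proj2_sig x).
Qed.

Lemma fperm_agree h : G0 h -> G1 h -> fperm false h = fperm true h.
Proof.
  intros A B. assert (Hh : H h) by (split; auto). apply Perm_ext; intro x; simpl; apply X_ext.
  - rewrite !Xact_H; auto.
  - rewrite !Xact_H; auto; apply HV; auto.
Qed.

Lemma hom_one (K : Group) (phi : G -> K) : is_hom_on (fun _ => True) phi -> phi e = gone.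
Proof.
  intro Hp. pose proof (Hp e e I I) as E. rewrite gmul1 in E.
  apply (mulg_canl (phi e)). rewrite mulg1. symmetry; exact E.
Qed.

Theorem NF l : redw l -> l <> [] -> ~ H (prod l).
Proof.
  intros R Nl Hl.
  destruct Ham as [_ [_ U]].
  destruct (U PermG (fperm false) (fperm true) (fperm_hom false) (fperm_hom true) fperm_agree) as [[phi [Hphi [E0 E1]]] _].
  set (x0 := exist valid [] I : X).
  assert (Claim : forall l, redw l -> length (proj1_sig (fst (proj1_sig (phi (prod l))) x0)) = length l /\
            (l = [] \/ exists l', proj1_sig (fst (proj1_sig (phi (prod l))) x0) = (ftype l, rep (hd e (map snd l))) :: l')).
  { clear l R Nl Hl. induction l as [|[k x] l IH]; intros R.
    - simpl. rewrite (hom_one _ _ Hphi). simpl. auto.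
    - simpl in R. destruct R as [A [B [C D]]]. specialize (IH C).
      destruct IH as [IH1 IH2].
      assert (Ns : nsj k (proj1_sig (fst (proj1_sig (phi (prod l))) x0))).
      { destruct IH2 as [El|[l' El']].
        - subst l. destruct (proj1_sig (fst (proj1_sig (phi (prod []))) x0)) as [|[]]; simpl in IH1; [simpl; auto|discriminate].
        - destruct l as [|[k' x'] l]. + rewrite El' in IH1; discriminate. + rewrite El'. simpl. exact D. }
      destruct (act_len k x _ A B Ns) as [l' [El' Ll']].
      assert (V : proj1_sig (fst (proj1_sig (phi (prod ((k,x)::l)))) x0) = (k, rep x) :: l').
      { simpl prod. rewrite Hphi by auto.
        assert (Ex : phi x = fperm k x) by (destruct k; [apply E1|apply E0]; exact A).
        rewrite Ex. simpl. unfold Xact. destruct (dec (Gj k x)) as [Gk2|N]; [|contradiction]. simpl. exact El'. }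
      simpl prod in V |- *. rewrite V. simpl. split; [f_equal; eapply eq_trans; [exact Ll'|exact IH1]|]. right. eexists; reflexivity. }
  destruct (Claim l R) as [L1 _].
  assert (G0l : G0 (prod l)) by (destruct Hl; auto).
  rewrite E0 in L1 by exact G0l. simpl in L1.
  rewrite (Xact_H false (prod l) x0 Hl) in L1. simpl in L1.
  destruct l; [congruence|discriminate].
Qed.


Lemma P_prod' k x l : redw ((k,x)::l) -> P k (prod ((k,x)::l)).
Proof. intro R. exact (P_prod ((k,x)::l) R ltac:(discriminate)). Qed.

Definition wcar := (G * (G -> bool))%type.
Definition wmul (p q : wcar) : wcar :=
  (fst p * fst q, fun x => xorb (snd q x) (snd p (fst q * x))).
Definition winv (p : wcar) : wcar := (ginv (fst p), fun x => snd p (ginv (fst p) * x)).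
Definition wone : wcar := (e, fun _ => false).

Definition WG : Group.
Proof.
  refine (@Build_Group wcar wmul winv wone _ _ _).
  - intros [a c] [a' c'] [a'' c'']. unfold wmul; simpl. f_equal.
    + apply gmulA.
    + apply functional_extensionality; intro x. rewrite gmulA, xorb_assoc. reflexivity.
  - intros [a c]. unfold wmul, wone; simpl. f_equal. + apply gmul1.
    + apply functional_extensionality; intro x. rewrite xorb_false_r. reflexivity.
  - intros [a c]. unfold wmul, winv, wone; simpl. f_equal. + apply gmulV.
    + apply functional_extensionality; intro x. rewrite mulKg, xorb_nilpotent. reflexivity.
Defined.

Definition Sx (x : G) : Prop := H x \/ P false x \/ P true x.

Lemma Sx_closed i y x : Gj i y -> Sx x -> Sx (y * x).
Proof.
  intros Gy Sx0. destruct (dec (H y)) as [Hy|Ny].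
  - destruct Sx0 as [Hx|[Px|Px]]; [left; apply HM; auto|right; left|right; right]; apply P_Hl; auto.
  - assert (Pos : forall j, P j x -> Sx (y * x)).
    { intros j [[|[k a] l'] [R [N [F Hl]]]]; [congruence|]. unfold ftype in F. simpl in F. subst k.
      destruct (Bool.bool_dec i j) as [<-|Nij].
      + simpl in R. destruct R as [A [B [C D]]].
        destruct (dec (H (y * a))) as [Hya|Nya].
        * destruct l' as [|[k b] l''].
          -- left. simpl in Hl. replace (y * x) with ((y * a) * (ginv (a * e) * x)) by gs. apply HM; auto.
          -- simpl in D. subst k. right.
             assert (Pr : P (negb i) (prod ((negb i, (y*a) * b) :: l''))).
             { apply P_prod'. apply redw_absorb; auto. }
             assert (E : y * x = prod ((negb i, (y*a) * b) :: l'') * (ginv (prod ((i,a)::(negb i,b)::l'')) * x)).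
             { simpl. gs. }
             rewrite E. destruct i; [left|right]; apply P_Hr; auto.
        * assert (Pr : P i (prod ((i, y * a) :: l'))).
          { apply P_prod'. simpl. split; [apply GM; auto|]. split; auto. }
          assert (E : y * x = prod ((i, y*a) :: l') * (ginv (prod ((i,a)::l')) * x)) by (simpl; gs).
          rewrite E. right. destruct i; [right|left]; apply P_Hr; auto.
      + assert (Pr : P i (prod ((i,y)::(j,a)::l'))).
        { apply P_prod'. simpl. simpl in R. split; auto. split; auto. split; auto.
          destruct i, j; simpl; congruence. }
        assert (E : y * x = prod ((i,y)::(j,a)::l') * (ginv (prod ((j,a)::l')) * x)) by (simpl; gs).
        rewrite E. right. destruct i; [right|left]; apply P_Hr; auto. }
    destruct Sx0 as [Hx|[Px|Px]].
    + right. assert (Pr : P i (prod [(i,y)])) by (apply P_prod'; simpl; auto).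
      replace (y * x) with (prod [(i,y)] * x) by (simpl; gs).
      destruct i; [right|left]; apply P_Hr; auto.
    + apply (Pos false Px).
    + apply (Pos true Px).
Qed.

Lemma Sx_iff i y x : Gj i y -> (Sx x <-> Sx (y * x)).
Proof.
  intro Gy. split; [apply (Sx_closed i); auto|]. intro S2.
  replace x with (ginv y * (y * x)) by gs. apply (Sx_closed i); auto. apply GV; auto.
Qed.

Definition sb (x : G) : bool := if dec (Sx x) then true else false.

Theorem coverage x : H x \/ P false x \/ P true x.
Proof.
  destruct Ham as [_ [_ U]].
  set (phi := fun g : G => ((g, fun _ => false) : WG)).
  set (psi := fun g : G => ((g, fun x => xorb (sb x) (sb (g * x))) : WG)).
  assert (Hphi : forall S, is_hom_on S phi).
  { intros S a b _ _. unfold phi. simpl. unfold wmul. simpl. reflexivity. }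
  assert (Hpsi : is_hom_on (fun _ => True) psi).
  { intros a b _ _. unfold psi. simpl. unfold wmul. simpl. f_equal.
    apply functional_extensionality; intro z. rewrite gmulA.
    destruct (sb z), (sb (b * z)), (sb (a * b * z)); reflexivity. }
  assert (Agr : forall i g, Gj i g -> psi g = phi g).
  { intros i g Gg. unfold psi, phi. f_equal. apply functional_extensionality; intro z.
    unfold sb. destruct (dec (Sx z)) as [A|A]; destruct (dec (Sx (g * z))) as [B|B]; auto.
    - exfalso; apply B; apply (Sx_iff i); auto.
    - exfalso; apply A; apply (Sx_iff i g); auto. }
  destruct (U WG phi phi (Hphi _) (Hphi _) (fun _ _ _ => eq_refl)) as [_ Uq].
  pose proof (Uq phi psi (Hphi _) Hpsi (fun _ _ => eq_refl) (fun _ _ => eq_refl)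
     (fun x Hx => Agr false x Hx) (fun x Hx => Agr true x Hx) x) as E.
  unfold phi, psi in E. injection E. intro E2.
  apply (f_equal (fun f => f e)) in E2. rewrite mulg1 in E2.
  assert (Se : sb e = true) by (unfold sb; destruct (dec (Sx e)) as [_|N]; [auto|exfalso; apply N; left; apply H1]).
  rewrite Se in E2. unfold sb in E2. destruct (dec (Sx x)) as [Sx0|_]; [exact Sx0|discriminate].
Qed.

Lemma P_notH j t : P j t -> ~ H t.
Proof.
  intros [l [R [N [F Hl]]]] Ht. apply (NF l R N).
  replace (prod l) with (t * ginv (ginv (prod l) * t)) by gs. apply HM; auto. apply HV; auto.
Qed.

Lemma P_disj j t : P j t -> P (negb j) t -> False.
Proof.
  intros [l1 [R1 [N1 [F1 H1']]]] [l2 [R2 [N2 [F2 H2']]]].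
  apply (NF (invrev l2 ++ l1)).
  - apply redw_app; auto. apply redw_invrev; auto.
    destruct l1 as [|[k x] l1]; [congruence|]. unfold ftype in F1; simpl in F1. subst k.
    unfold compat. rewrite (ltype_invrev l2 N2). rewrite F2.
    destruct (invrev l2); [exact I|]. destruct j; reflexivity.
  - destruct l1; [congruence|]. destruct (invrev l2); discriminate.
  - rewrite prod_app, prod_invrev. 
    replace (ginv (prod l2) * prod l1) with ((ginv (prod l2) * t) * ginv (ginv (prod l1) * t)) by gs.
    apply HM; auto. apply HV; auto.
Qed.



Definition CH (l : bool) (t : G) : Prop := H t \/ P l t.
Definition Cone (c : G) (l : bool) (a : G) : Prop := CH l (ginv c * a).

Lemma CH_Hl l h t : H h -> CH l t -> CH l (h * t).
Proof. intros Hh [A|A]; [left; apply HM; auto|right; apply P_Hl; auto]. Qed.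

Lemma CH_disj l t : CH l t -> P (negb l) t -> False.
Proof. intros [A|A] B. - exact (P_notH _ _ B A). - exact (P_disj _ _ A B). Qed.

Lemma Cone_e l a : Cone e l a <-> CH l a.
Proof. unfold Cone. rewrite invg1, gmul1. tauto. Qed.

Lemma Cone_mul d c l a : Cone (d * c) l (d * a) <-> Cone c l a.
Proof. unfold Cone. replace (ginv (d * c) * (d * a)) with (ginv c * a) by gs. tauto. Qed.

Lemma Cone_self c l : Cone c l c.
Proof. unfold Cone. left. gs. apply H1. Qed.

Lemma CONC' w u : redw w -> w <> [] -> CH (negb (ltype w)) u -> P (ftype w) (prod w * u).
Proof. intros R N C. apply CONC; auto. Qed.

Lemma redw_replace_last w k y y' : redw (w ++ [(k,y)]) -> Gj k y' -> ~ H y' -> redw (w ++ [(k,y')]).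
Proof.
  induction w as [|[k0 x0] w IH]; simpl.
  - intros [A [B [C D]]] Gy Ny. auto.
  - intros [A [B [C D]]] Gy Ny. split; [auto|]. split; [auto|]. split; [apply IH; auto|].
    destruct w as [|[k1 x1] w]; simpl in *; auto.
Qed.

Lemma ftype_app w a : w <> [] -> ftype (w ++ [a]) = ftype w.
Proof. destruct w; [congruence|]. reflexivity. Qed.
Lemma ltype_app w k y : ltype (w ++ [(k,y)]) = k.
Proof. unfold ltype. rewrite last_app_single. reflexivity. Qed.

Definition movesoff (g c : G) (l : bool) : Prop :=
  forall b, Cone c l b -> ~ Cone c l (g * b).

Lemma core_C w h g l : redw w -> w <> [] -> H h -> g = prod w * h ->
  ftype w = negb l -> ltype w = l ->
  exists c' l', (forall b, Cone c' l' b -> CH l b) /\ movesoff g c' l'.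
Proof.
  intros R N Hh Eg F L.
  destruct (exists_last N) as [wi [[k ym] Ew]]. subst w. rewrite ltype_app in L. subst k.
  assert (Nwi : wi <> []).
  { intro E. subst wi. simpl in F. destruct l; discriminate. }
  rewrite ftype_app in F by auto.
  destruct (redw_app_inv _ _ R) as [Rwi Rym]. simpl in Rym. destruct Rym as [Gym [Nym _]].
  set (z := ym * h).
  assert (Gz : Gj l z) by (apply GM; auto; apply HG; auto).
  destruct (classic (exists x, Gj l x /\ ~ H x /\ ~ H (z * x))) as [[x [Gx [Nx Nzx]]]|Nall].
  -
    exists x, (negb l). split.
    + intros b Cb. right. replace b with (prod [(l,x)] * (ginv x * b)) by (simpl; gs).
      apply (CONC' [(l,x)]); [simpl; auto|discriminate|]. simpl. unfold ltype; simpl. exact Cb.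
    + intros b Cb Cgb.
      assert (Incl : forall b, Cone x (negb l) b -> CH l b).
      { intros b' Cb'. right. replace b' with (prod [(l,x)] * (ginv x * b')) by (simpl; gs).
        apply (CONC' [(l,x)]); [simpl; auto|discriminate|]. simpl. unfold ltype; simpl. exact Cb'. }
      apply (CH_disj l (g * b) (Incl _ Cgb)).
      assert (Rw' : redw (wi ++ [(l, z * x)])) by (eapply redw_replace_last; eauto; apply GM; auto).
      replace (g * b) with (prod (wi ++ [(l, z * x)]) * (ginv x * b)).
      * rewrite <- F. rewrite <- (ftype_app wi (l, z * x)) by auto.
        apply CONC'; auto. { destruct wi; [congruence|discriminate]. } rewrite ltype_app. exact Cb.
      * subst g. rewrite !prod_app. simpl. unfold z. gs.
  -
    assert (Hall : forall x, Gj l x -> ~ H x -> H (z * x)).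
    { intros x Gx Nx. apply NNPP. intro Nzx. apply Nall. exists x; auto. }
    assert (N3 : ~ index_ge3 G G0 G1 (Gj l)).
    { intros [a [b [Ga [Gb [Na [Nb Nab]]]]]]. apply Nab.
      replace (ginv a * b) with (ginv (z * a) * (z * b)) by gs. apply HM; [apply HV|]; auto. }
    assert (I3 : index_ge3 G G0 G1 (Gj (negb l))).
    { destruct Hnd as [_ [_ [I0|I1]]]; destruct l; simpl in *; tauto. }
    assert (I2 : index_ge2 G G0 G1 (Gj l)).
    { destruct Hnd as [J0 [J1 _]]; destruct l; simpl; auto. }
    destruct I2 as [x0 [Gx0 Nx0]].
    destruct I3 as [a1 [a2 [Ga1 [Ga2 [Na1 [Na2 Na12]]]]]].
    destruct (exists_last Nwi) as [w2 [[k' y1] Ewi]]. subst wi.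
    assert (Ek' : k' = negb l).
    { pose proof R as R'. rewrite <- app_assoc in R'. simpl in R'.
      apply redw_app_inv in R'. destruct R' as [_ R']. simpl in R'. destruct R' as [_ [_ [_ D]]]. 
      subst. destruct k'; reflexivity. }
    subst k'.
    destruct (redw_app_inv _ _ Rwi) as [Rw2 Ry1]. simpl in Ry1. destruct Ry1 as [Gy1 [Ny1 _]].
    set (hh := z * x0). assert (Hhh : H hh) by (apply Hall; auto).
    set (c := y1 * hh).
    assert (Nc : ~ H c) by (intro Hc; apply Ny1; apply (HMr y1 hh); auto).
    assert (Gc : Gj (negb l) c) by (apply GM; auto; apply HG; auto).
    assert (Ew0 : exists w0, Gj (negb l) w0 /\ ~ H w0 /\ ~ H (c * w0)).
    { destruct (classic (H (c * a1))) as [C1|C1]; [|exists a1; auto].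
      destruct (classic (H (c * a2))) as [C2|C2]; [|exists a2; auto].
      exfalso. apply Na12. replace (ginv a1 * a2) with (ginv (c * a1) * (c * a2)) by gs.
      apply HM; [apply HV|]; auto. }
    destruct Ew0 as [w0 [Gw0 [Nw0 Ncw0]]].
    assert (Incl : forall b, Cone (x0 * w0) l b -> CH l b).
    { intros b Cb. right. 
      replace b with (prod [(l,x0);(negb l,w0)] * (ginv (x0 * w0) * b)) by (simpl; gs).
      refine (CONC' [(l,x0);(negb l,w0)] _ _ _ _); [simpl; auto 10|discriminate|]. unfold ltype; simpl. rewrite negb_involutive. exact Cb. }
    exists (x0 * w0), l. split; [exact Incl|].
    intros b Cb Cgb. apply (CH_disj l (g * b) (Incl _ Cgb)).
    assert (Rw' : redw (w2 ++ [(negb l, c * w0)])) by (eapply redw_replace_last; eauto; apply GM; auto).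
    replace (g * b) with (prod (w2 ++ [(negb l, c * w0)]) * (ginv (x0 * w0) * b)).
    + assert (Fx : ftype (w2 ++ [(negb l, c * w0)]) = negb l).
      { destruct w2 as [|a w2]; [reflexivity|]. rewrite ftype_app by discriminate.
        rewrite <- F. reflexivity. }
      assert (Cu : CH (negb (ltype (w2 ++ [(negb l, c * w0)]))) (ginv (x0 * w0) * b)).
      { rewrite ltype_app, negb_involutive. exact Cb. }
      pose proof (CONC' _ _ Rw' ltac:(destruct w2; discriminate) Cu) as Q. rewrite Fx in Q. exact Q.
    + subst g. rewrite !prod_app. simpl. unfold c, hh, z. gs.
Qed.

Lemma bool_ne b l : b <> l -> b = negb l.
Proof. destruct b, l; simpl; congruence. Qed.

Lemma core g l : ~ H g -> exists c' l', (forall b, Cone c' l' b -> CH l b) /\ movesoff g c' l'.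
Proof.
  intro Ng. destruct (coverage g) as [Hg|Pg]; [contradiction|].
  assert (Ps : exists s, P s g) by (destruct Pg; eauto). clear Pg.
  destruct Ps as [s [w [R [N [F Hw]]]]].
  set (h := ginv (prod w) * g) in Hw.
  assert (Eg : g = prod w * h) by (unfold h; gs).
  destruct (Bool.bool_dec (ftype w) l) as [Fl|Fl]; destruct (Bool.bool_dec (ltype w) l) as [Ll|Ll].
  -
    assert (Pl : forall b, Cone g (negb l) b -> P l b).
    { intros b Cb. replace b with (prod w * (h * (ginv g * b))) by (rewrite Eg; gs).
      rewrite <- Fl. apply CONC'; auto. rewrite Ll. apply CH_Hl; auto. }
    exists g, (negb l). split.
    + intros b Cb. right. apply Pl; auto.
    + intros b Cb Cgb. unfold Cone in Cgb. rewrite mulKg in Cgb.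
      apply (CH_disj (negb l) b Cgb). rewrite negb_involutive. apply Pl; auto.
  -
    apply bool_ne in Ll.
    assert (Ni : invrev w <> []) by (destruct w; [congruence|]; unfold invrev; simpl; destruct (rev w); discriminate).
    destruct (invrev w) as [|[k x] r] eqn:Ei; [congruence|].
    set (w' := (k, ginv h * x) :: r).
    assert (Rw' : redw w').
    { apply (redw_absorb (ginv h) k x r); [apply HV; auto|]. pose proof (redw_invrev w R) as Q; rewrite Ei in Q; exact Q. }
    assert (Pw' : prod w' = ginv g).
    { unfold w'. simpl. rewrite Eg. rewrite invgM. rewrite <- prod_invrev. rewrite Ei. simpl. gs. }
    assert (Fw' : ftype w' = negb l).
    { unfold w'. simpl. rewrite <- Ll. rewrite <- (ftype_invrev w) by auto. rewrite Ei. reflexivity. }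
    assert (Lw' : ltype w' = l).
    { rewrite <- Fl. rewrite <- (ltype_invrev w) by auto. rewrite Ei. unfold w'.
      destruct r; [reflexivity|]. rewrite !ltype_cons by discriminate. reflexivity. }
    destruct (core_C w' e (ginv g) l Rw' ltac:(discriminate) H1 ltac:(rewrite Pw'; gs) Fw' Lw')
      as [c' [l' [Inc Mv]]].
    exists c', l'. split; [exact Inc|].
    intros b Cb Cgb. apply (Mv (g * b) Cgb). rewrite mulKg. exact Cb.
  -
    apply bool_ne in Fl.
    apply (core_C w h g l); auto.
  -
    apply bool_ne in Fl. apply bool_ne in Ll.
    exists e, l. split.
    + intros b Cb. apply (proj1 (Cone_e l b)); auto.
    + intros b Cb Cgb. apply (proj1 (Cone_e l b)) in Cb. apply (proj1 (Cone_e l (g * b))) in Cgb.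
      apply (CH_disj l (g * b) Cgb). rewrite <- Fl. rewrite Eg. rewrite <- gmulA.
      apply CONC'; auto. rewrite Ll, negb_involutive. apply CH_Hl; auto.
Qed.

Lemma Tword_list j k g : Tword G G0 G1 j k g ->
  exists w, redw w /\ length w = k /\ (w = [] \/ ftype w = j) /\ prod w = g.
Proof.
  revert j g; induction k as [|k IH]; intros j g T.
  - simpl in T. subst g. exists []. simpl. auto.
  - simpl in T. destruct T as [x [y [Gx [Nx [Ty Eg]]]]].
    destruct (IH _ _ Ty) as [w [R [L [F Pw]]]].
    exists ((j,x)::w). split; [|split; [simpl; congruence|split; [right; reflexivity|simpl; congruence]]].
    simpl. split; [auto|]. split; [auto|]. split; [auto|].
    destruct w as [|[k' x'] w]; auto. destruct F as [F|F]; [discriminate|]. exact F.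
Qed.

Lemma list_Tword w j : redw w -> (w = [] \/ ftype w = j) -> Tword G G0 G1 j (length w) (prod w).
Proof.
  revert j; induction w as [|[k x] w IH]; intros j R F; simpl; auto.
  destruct F as [F|F]; [discriminate|]. simpl in F. unfold ftype in F. simpl in F. subst k.
  simpl in R. destruct R as [A [B [C D]]].
  exists x, (prod w). split; [auto|]. split; [auto|]. split; [|reflexivity].
  apply IH; auto. destruct w as [|[k' x'] w]; [left; reflexivity|right; exact D].
Qed.

Lemma Kset_CH l x a : Kset G G0 G1 l x -> CH l a -> H (ginv a * x * a).
Proof.
  intros K [Ha|[w [R [N [F Hw]]]]].
  - exact (K 0 a Ha).
  - set (h := ginv (prod w) * a) in Hw.
    assert (Ea : a = prod w * h) by (unfold h; gs).
    assert (T : Tset G G0 G1 l (length w) (prod w)).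
    { destruct w as [|p w]; [congruence|]. simpl. apply (list_Tword (p::w) l R (or_intror F)). }
    pose proof (K _ _ T) as Hk.
    replace (ginv a * x * a) with (ginv h * (ginv (prod w) * x * prod w) * h) by (rewrite Ea; gs).
    apply HM; [apply HM; [apply HV|]|]; auto.
Qed.

Lemma CH_Kset l x : (forall a, CH l a -> H (ginv a * x * a)) -> Kset G G0 G1 l x.
Proof.
  intros A k g T. destruct k as [|k].
  - apply A. left. exact T.
  - apply A. right. destruct (Tword_list _ _ _ T) as [w [R [L [F Pw]]]].
    destruct w as [|p w]; [discriminate|]. destruct F as [F|F]; [discriminate|].
    subst g. rewrite <- F. apply P_prod; auto. discriminate.
Qed.

Definition Kstar := forall j x, Kset G G0 G1 j x -> x = e.

Lemma step c l f : Kstar -> f <> e ->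
  exists c' l', (forall b, Cone c' l' b -> Cone c l b) /\ movesoff f c' l'.
Proof.
  intros KS Nf.
  set (f' := ginv c * f * c).
  assert (Nf' : f' <> e).
  { intro E. apply Nf. replace f with (c * f' * ginv c) by (unfold f'; gs). rewrite E. gs. }
  assert (Ex : exists a, CH l a /\ ~ H (ginv a * f' * a)).
  { apply NNPP. intro NE. apply Nf'. apply (KS l). apply CH_Kset. intros a Ca.
    apply NNPP. intro Na. apply NE. exists a. auto. }
  destruct Ex as [a [Ca Na]].
  set (g0 := ginv a * f' * a).
  assert (Fw : exists l2, forall b, Cone a l2 b -> CH l b).
  { destruct Ca as [Ha|[w [R [N [F Hw]]]]].
    - exists l. intros b Cb. replace b with (a * (ginv a * b)) by gs. apply CH_Hl; auto.
    - exists (negb (ltype w)). intros b Cb. right.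
      replace b with (prod w * ((ginv (prod w) * a) * (ginv a * b))) by gs.
      rewrite <- F. apply CONC'; auto. apply CH_Hl; auto. }
  destruct Fw as [l2 Fw].
  destruct (core g0 l2 Na) as [c'' [l'' [Inc Mv]]].
  exists (c * a * c''), l''. split.
  - intros b Cb. unfold Cone in Cb. replace (ginv (c * a * c'') * b) with (ginv c'' * (ginv (c * a) * b)) in Cb by gs.
    pose proof (Inc _ Cb) as X1.
    assert (X2 : Cone a l2 (ginv c * b)) by (unfold Cone; replace (ginv a * (ginv c * b)) with (ginv (c * a) * b) by gs; exact X1).
    exact (Fw _ X2).
  - intros b Cb Cfb. apply (Mv (ginv (c * a) * b)).
    + unfold Cone in *. replace (ginv c'' * (ginv (c * a) * b)) with (ginv (c * a * c'') * b) by gs. exact Cb.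
    + unfold Cone in *. replace (ginv c'' * (g0 * (ginv (c * a) * b))) with (ginv (c * a * c'') * (f * b))
        by (unfold g0, f'; gs). exact Cfb.
Qed.

Lemma KEY F : Kstar -> (forall f, In f F -> f <> e) ->
  exists c l, forall f, In f F -> movesoff f c l.
Proof.
  intro KS. induction F as [|f F IH]; intros NF0.
  - exists e, true. intros f [].
  - destruct IH as [c [l M]]. { intros f' I. apply NF0. right; auto. }
    destruct (step c l f KS (NF0 f (or_introl eq_refl))) as [c' [l' [Inc Mf]]].
    exists c', l'. intros f2 [E|I].
    + subst f2. exact Mf.
    + intros b Cb Cfb. apply (M f2 I b (Inc _ Cb) (Inc _ Cfb)).
Qed.

Local Notation V := (vertex G).
Local Notation veq := (veq G G0 G1).
Local Notation adj := (adj G G0 G1).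
Local Notation is_ray := (is_ray G G0 G1).
Local Notation cofinal := (cofinal G G0 G1).
Local Notation Zset := (Zset G G0 G1).
Local Notation vact := (vact G).
Local Notation ray_act := (ray_act G).

Lemma veq_refl v : veq v v.
Proof. split; [reflexivity|]. gs. apply Ge. Qed.
Lemma veq_sym v w : veq v w -> veq w v.
Proof. intros [E A]. split; [auto|]. rewrite <- E. replace (ginv (snd w) * snd v) with (ginv (ginv (snd v) * snd w)) by gs. apply GV; auto. Qed.
Lemma veq_trans u v w : veq u v -> veq v w -> veq u w.
Proof.
  intros [E1 A1] [E2 A2]. split; [congruence|].
  replace (ginv (snd u) * snd w) with ((ginv (snd u) * snd v) * (ginv (snd v) * snd w)) by gs.
  apply GM; auto. rewrite E1; auto.
Qed.
Lemma veq_act g v w : veq v w -> veq (vact g v) (vact g w).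
Proof. intros [E A]. split; [exact E|]. simpl. replace (ginv (g * snd v) * (g * snd w)) with (ginv (snd v) * snd w) by gs. exact A. Qed.
Lemma adj_veq v w v' w' : adj v w -> veq v v' -> veq w w' -> adj v' w'.
Proof.
  intros [Ne [g [A B]]] Vv Ww. destruct Vv as [Ev Gv]. destruct Ww as [Ew Gw].
  split; [congruence|]. exists g. split.
  - rewrite <- Ev. apply veq_trans with v; [apply veq_sym; split; auto|exact A].
  - rewrite <- Ew. apply veq_trans with w; [apply veq_sym; split; auto|exact B].
Qed.
Lemma vact_comp a b v : vact a (vact b v) = vact (a * b) v.
Proof. unfold Defs.vact. simpl. rewrite gmulA. reflexivity. Qed.
Lemma ray_act_comp a b x : ray_act a (ray_act b x) = ray_act (a * b) x.
Proof. apply functional_extensionality. intro n. unfold Defs.ray_act. apply vact_comp. Qed.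
Lemma ray_act_e x : ray_act e x = x.
Proof. apply functional_extensionality. intro n. unfold Defs.ray_act, Defs.vact. rewrite gmul1. destruct (x n); reflexivity. Qed.

Lemma ray_act_ray g x : is_ray x -> is_ray (ray_act g x).
Proof.
  intros R n. destruct (R n) as [[Ne [c [A B]]] NB]. unfold Defs.ray_act. split.
  - split; [exact Ne|]. exists (g * c). split.
    + apply (veq_act g) in A. exact A.
    + apply (veq_act g) in B. exact B.
  - intro X. apply NB. destruct X as [E A2]. split; [exact E|]. simpl in A2.
    replace (ginv (snd (x (S (S n)))) * snd (x n)) with (ginv (g * snd (x (S (S n)))) * (g * snd (x n))) by gs. exact A2.
Qed.

Lemma cof_refl x : cofinal x x.
Proof. exists 0, 0. intro; apply veq_refl. Qed.
Lemma cof_sym x y : cofinal x y -> cofinal y x.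
Proof. intros [m [k C]]. exists k, m. intro n. apply veq_sym, C. Qed.
Lemma cof_trans x y z : cofinal x y -> cofinal y z -> cofinal x z.
Proof.
  intros [m [k C]] [m' [k' C']]. exists (m + m'), (k + k'). intro n.
  apply veq_trans with (y (n + m' + k)).
  - replace (n + (m + m')) with ((n + m') + m) by lia. apply C.
  - replace (n + m' + k) with ((n + k) + m') by lia. replace (n + (k + k')) with ((n + k) + k') by lia. apply C'.
Qed.
Lemma cof_act g x y : cofinal x y -> cofinal (ray_act g x) (ray_act g y).
Proof. intros [m [k C]]. exists m, k. intro n. unfold Defs.ray_act. apply veq_act, C. Qed.

Lemma Zset_act g j c x : Zset j c x -> Zset j (g * c) (ray_act g x).
Proof.
  intros [y [Ry [Cy [n [A B]]]]]. exists (ray_act g y). split; [apply ray_act_ray; auto|]. split; [apply cof_act; auto|].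
  exists n. unfold Defs.ray_act. split.
  - apply (veq_act g) in A. exact A.
  - apply (veq_act g) in B. exact B.
Qed.
Lemma Zset_cof j c x x' : Zset j c x -> cofinal x' x -> Zset j c x'.
Proof. intros [y [Ry [Cy P0]]] C. exists y. split; auto. split; auto. apply cof_trans with x; auto. Qed.
Lemma Zset_H j c c' x : H (ginv c * c') -> Zset j c x -> Zset j c' x.
Proof.
  intros Hc [y [Ry [Cy [n [A B]]]]]. exists y. split; auto. split; auto. exists n. split.
  - apply veq_trans with (j, c); auto. split; [reflexivity|]. apply HG; auto.
  - apply veq_trans with (negb j, c); auto. split; [reflexivity|]. apply HG; auto.
Qed.
Lemma Zset_self x n j c : is_ray x -> veq (x n) (j, c) -> veq (x (S n)) (negb j, c) -> Zset j c x.
Proof. intros R A B. exists x. split; auto. split; [apply cof_refl|]. exists n; auto. Qed.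

Lemma ray_edge x n : is_ray x -> exists j c, veq (x n) (j, c) /\ veq (x (S n)) (negb j, c).
Proof.
  intro R. destruct (R n) as [[Ne [c [A B]]] _]. exists (fst (x n)), c. split; auto.
  replace (negb (fst (x n))) with (fst (x (S n))); auto.
  destruct (fst (x n)), (fst (x (S n))); simpl in *; congruence.
Qed.

Definition prep (v : V) (u : nat -> V) (p : nat) : nat -> V :=
  fun i => match i with 0 => v | S i' => u (p + i') end.
Lemma prep_ray v u p : is_ray u -> adj v (u p) -> ~ veq (u (S p)) v -> is_ray (prep v u p).
Proof.
  intros R A N n. destruct n as [|n]; simpl.
  - split; [rewrite Nat.add_0_r; exact A|]. rewrite Nat.add_1_r. exact N.
  - destruct (R (p + n)) as [A' N']. split.
    + rewrite Nat.add_succ_r. exact A'.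
    + rewrite !Nat.add_succ_r. exact N'.
Qed.
Lemma prep_cof v u p : cofinal u (prep v u p).
Proof. exists p, 1. intro n. rewrite Nat.add_1_r. simpl. rewrite Nat.add_comm. apply veq_refl. Qed.

Definition splice (y : nat -> V) (q : nat) (w : nat -> V) (r : nat) : nat -> V :=
  fun i => if i <=? q then y i else w (r + (i - q)).

Lemma splice_ray y q w r : is_ray y -> is_ray w -> 1 <= q -> veq (y q) (w r) -> veq (y (S q)) (w (S r)) -> is_ray (splice y q w r).
Proof.
  intros Ry Rw Hq Eq1 Eq2 n. unfold splice.
  destruct (Nat.leb_spec (S (S n)) q) as [L2|L2].
  - rewrite (proj2 (Nat.leb_le n q)) by lia. rewrite (proj2 (Nat.leb_le (S n) q)) by lia.
    apply Ry.
  - destruct (Nat.eq_dec (S n) q) as [E|E].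
    +
      subst q. rewrite (proj2 (Nat.leb_le n (S n))) by lia. rewrite (proj2 (Nat.leb_le (S n) (S n))) by lia.
      replace (r + (S (S n) - S n)) with (S r) by lia.
      destruct (Ry n) as [A N]. split; [exact A|]. intro X. apply N.
      apply veq_trans with (w (S r)); auto. 
    + destruct (Nat.eq_dec n q) as [E2|E2].
      * subst q. rewrite (proj2 (Nat.leb_le n n)) by lia.
        rewrite (proj2 (Nat.leb_nle (S n) n)) by lia.
        replace (r + (S n - n)) with (S r) by lia. replace (r + (S (S n) - n)) with (S (S r)) by lia.
        destruct (Rw r) as [A N]. split.
        -- apply adj_veq with (w r) (w (S r)); auto. apply veq_sym; auto. apply veq_refl.
        -- intro X. apply N. apply veq_trans with (y n); auto.
      * rewrite (proj2 (Nat.leb_nle n q)) by lia.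
        rewrite (proj2 (Nat.leb_nle (S n) q)) by lia.
        replace (r + (S n - q)) with (S (r + (n - q))) by lia. replace (r + (S (S n) - q)) with (S (S (r + (n - q)))) by lia.
        apply Rw.
Qed.

Lemma splice_cof y q w r : cofinal w (splice y q w r).
Proof.
  exists (S r), (S q). intro n. unfold splice. rewrite (proj2 (Nat.leb_nle (n + S q) q)) by lia.
  replace (r + (n + S q - q)) with (n + S r) by lia. apply veq_refl.
Qed.

Lemma TAIL x j c : is_ray x -> Zset j c x -> exists N, forall n, N <= n -> forall j' c',
  veq (x n) (j', c') -> veq (x (S n)) (negb j', c') -> forall z, Zset j' c' z -> Zset j c z.
Proof.
  intros Rx [y [Ry [[m [k Cxy]] [p [Ap Bp]]]]]. exists (m + S p). intros n Hn j' c' A B z [w [Rw [Czw [r [Ar Br]]]]].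
  set (q := n - m + k).
  assert (Xq : veq (x n) (y q)) by (unfold q; replace n with ((n - m) + m) at 1 by lia; apply Cxy).
  assert (XSq : veq (x (S n)) (y (S q))) by (unfold q; replace (S n) with ((S n - m) + m) at 1 by lia;
     replace (S (n - m + k)) with ((S n - m) + k) by lia; apply Cxy).
  assert (Yq : veq (y q) (w r)) by (apply veq_trans with (j', c'); [apply veq_trans with (x n); [apply veq_sym|]|apply veq_sym]; auto).
  assert (YSq : veq (y (S q)) (w (S r))) by (apply veq_trans with (negb j', c'); [apply veq_trans with (x (S n)); [apply veq_sym|]|apply veq_sym]; auto).
  exists (splice y q w r). split; [apply splice_ray; auto; unfold q; lia|].
  split; [apply cof_trans with w; auto; apply splice_cof|].
  exists p. unfold splice. rewrite (proj2 (Nat.leb_le p q)) by (unfold q; lia).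
  rewrite (proj2 (Nat.leb_le (S p) q)) by (unfold q; lia). auto.
Qed.

Lemma NB U : gen_open G G0 G1 U -> forall x, is_ray x -> U x ->
  exists j c, Zset j c x /\ forall z, Zset j c z -> U z.
Proof.
  induction 1 as [j g| |U V' GU IU GV IV|S GS IS]; intros x Rx Ux.
  - exists j, g. split; auto.
  - destruct (ray_edge x 0 Rx) as [j [c [A B]]]. exists j, c. split; [eapply Zset_self; eauto|]. auto.
  - destruct Ux as [Ux Vx]. destruct (IU x Rx Ux) as [j1 [c1 [Z1 S1]]]. destruct (IV x Rx Vx) as [j2 [c2 [Z2 S2]]].
    destruct (TAIL x j1 c1 Rx Z1) as [N1 T1]. destruct (TAIL x j2 c2 Rx Z2) as [N2 T2].
    destruct (ray_edge x (N1 + N2) Rx) as [j [c [A B]]]. exists j, c. split; [eapply Zset_self; eauto|].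
    intros z Zz. split.
    + apply S1. apply (T1 (N1 + N2) ltac:(lia) j c A B z Zz).
    + apply S2. apply (T2 (N1 + N2) ltac:(lia) j c A B z Zz).
  - destruct Ux as [U [SU Ux]]. destruct (IS U SU x Rx Ux) as [j [c [Z Sz]]]. exists j, c. split; auto.
    intros z Zz. exists U. auto.
Qed.

Lemma veq_Gy k y : Gj k y -> veq (k, y) (k, e).
Proof. intro Gy. split; [reflexivity|]. simpl. rewrite mulg1. apply GV; auto. Qed.

Lemma ADJ k y z : Gj k y -> Zset (negb k) y z \/ Zset k y z -> Zset false e z \/ Zset true e z.
Proof.
  intros Gy Zs.
  assert (Goal : forall s, Zset s e z -> Zset false e z \/ Zset true e z) by (intros [] Z; auto).
  assert (Adj0 : adj (negb k, e) (k, e)) by (split; [destruct k; discriminate|]; exists e; split; apply veq_refl).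
  destruct (classic (H y)) as [Hy|Ny].
  - destruct Zs as [Z|Z]; eapply Goal; eapply Zset_H; eauto; gs; apply HV; auto.
  - destruct Zs as [[u [Ru [Cu [p [Ap Bp]]]]]|[u [Ru [Cu [p [Ap Bp]]]]]].
    +
      rewrite negb_involutive in Bp.
      assert (B' : veq (u (S p)) (k, e)) by (apply veq_trans with (k, y); auto; apply veq_Gy; auto).
      destruct (classic (veq (u (S (S p))) (negb k, e))) as [Vq|Vq].
      * apply (Goal k). exists u. split; auto. split; auto. exists (S p). split; auto.
      * apply (Goal (negb k)). exists (prep (negb k, e) u (S p)). split.
        -- apply prep_ray; auto.
           apply adj_veq with (negb k, e) (k, e); auto. apply veq_refl. apply veq_sym; auto.
        -- split; [apply cof_trans with u; auto; apply prep_cof|]. exists 0. simpl. split; [apply veq_refl|].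
           rewrite Nat.add_0_r. rewrite negb_involutive. exact B'.
    +
      assert (A' : veq (u p) (k, e)) by (apply veq_trans with (k, y); auto; apply veq_Gy; auto).
      apply (Goal (negb k)). exists (prep (negb k, e) u p). split.
      * apply prep_ray; auto.
        -- apply adj_veq with (negb k, e) (k, e); auto. apply veq_refl. apply veq_sym; auto.
        -- intro X. apply Ny. apply (GH k); auto.
           assert (X2 : veq (negb k, y) (negb k, e)) by (apply veq_trans with (u (S p)); auto; apply veq_sym; auto).
           destruct X2 as [_ X2]. simpl in X2. rewrite mulg1 in X2. apply GVr; auto.
      * split; [apply cof_trans with u; auto; apply prep_cof|]. exists 0. simpl. split; [apply veq_refl|].
        rewrite Nat.add_0_r. rewrite negb_involutive. exact A'.
Qed.

Lemma Qlist (w : list letter) : Forall (fun p => Gj (fst p) (snd p)) w -> forall h, H h ->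
  forall τ z, is_ray z -> Zset τ (prod w * h) z -> Zset false e z \/ Zset true e z.
Proof.
  induction w as [|[k y] w IH]; intros Fw h Hh τ z Rz Z.
  - simpl in Z. rewrite gmul1 in Z. apply Zset_H with (c' := e) in Z; [destruct τ; auto|]. gs. apply HV; auto.
  - inversion Fw as [|a l Gy Fw']; subst. simpl in Gy.
    assert (Z' : Zset τ (prod w * h) (ray_act (ginv y) z)).
    { apply Zset_act with (g := ginv y) in Z. simpl in Z. replace (ginv y * (y * prod w * h)) with (prod w * h) in Z by gs. 
      simpl prod in Z. replace (ginv y * (y * prod w * h)) with (prod w * h) in Z by gs. exact Z. }
    destruct (IH Fw' h Hh τ _ (ray_act_ray _ _ Rz) Z') as [Z2|Z2];
      apply Zset_act with (g := y) in Z2; rewrite ray_act_comp, mulg1, mulgV, ray_act_e in Z2;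
      apply (ADJ k y z Gy); destruct k; auto.
Qed.

Lemma COV z : is_ray z -> Zset false e z \/ Zset true e z.
Proof.
  intro Rz. destruct (ray_edge z 0 Rz) as [j [c [A B]]]. pose proof (Zset_self z 0 j c Rz A B) as Z.
  destruct (coverage c) as [Hc|Pc].
  - apply (Qlist [] (Forall_nil _) c Hc j z Rz). simpl. rewrite gmul1. exact Z.
  - assert (Ex : exists s, P s c) by (destruct Pc; eauto). destruct Ex as [s [w [R [N [F Hw]]]]].
    apply (Qlist w) with (h := ginv (prod w) * c) (τ := j); auto.
    + clear -R. induction w as [|[k x] w IH]; constructor; simpl in *; [tauto|]. apply IH. tauto.
    + replace (prod w * (ginv (prod w) * c)) with c by gs. exact Z.
Qed.

Lemma CH_Hr l h t : H h -> CH l t -> CH l (t * h).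
Proof. intros Hh [A|A]; [left; apply HM; auto|right; apply P_Hr; auto]. Qed.

Lemma cov2 j a : CH j a \/ P (negb j) a.
Proof. unfold CH. destruct (coverage a) as [A|[A|A]]; destruct j; simpl; tauto. Qed.

Lemma idx2 j : exists a, Gj j a /\ ~ H a.
Proof. destruct Hnd as [A [B _]]. destruct j; simpl; [destruct B as [a B]|destruct A as [a A]]; exists a; tauto. Qed.

Fixpoint tau (l : bool) (n : nat) : bool := match n with 0 => negb l | S n => negb (tau l n) end.

Lemma canon_ray c l : exists x : nat -> V, is_ray x /\ x 0 = (negb l, c) /\ (forall n, Cone c l (snd (x n))) /\
  (forall n, fst (x (S n)) = negb (fst (x n))) /\ (forall n, Gj (fst (x (S n))) (ginv (snd (x n)) * snd (x (S n)))).
Proof.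
  destruct (idx2 false) as [a0 [Ga0 Na0]]. destruct (idx2 true) as [a1 [Ga1 Na1]].
  set (A := fun b : bool => if b then a1 else a0).
  assert (GA : forall b, Gj b (A b) /\ ~ H (A b)) by (intros []; simpl; auto).
  set (d := fix d n := match n with 0 => c | S n => d n * A (tau l (S n)) end).
  set (x := fun n => (tau l n, d n)).
  exists x.
  assert (Fx : forall n, fst (x (S n)) = negb (fst (x n))) by (intro n; reflexivity).
  assert (Gx : forall n, Gj (fst (x (S n))) (ginv (snd (x n)) * snd (x (S n)))).
  { intro n. simpl. gs. apply (GA _). }
  split; [|split; [reflexivity|split; [|split; [exact Fx|exact Gx]]]].
  - intro n. split.
    + split; [simpl; destruct (tau l n); discriminate|]. exists (d n). split; [apply veq_refl|].
      split; [reflexivity|]. simpl. gs. apply GV, (GA _).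
    + intros [E G2]. simpl in E, G2. rewrite negb_involutive in G2.
      destruct (GA (negb (tau l n))) as [Gb Nb]. destruct (GA (tau l n)) as [Gc Nc].
      apply Nb. apply (GH (negb (tau l n))); auto. rewrite negb_involutive.
      replace (ginv (d n * A (negb (tau l n)) * A (tau l n)) * d n) with (ginv (A (tau l n)) * ginv (A (negb (tau l n)))) in G2 by gs.
      apply GVr. apply (GMl (tau l n) (ginv (A (tau l n)))); auto. apply GV; auto.
  - assert (Inv : forall n, (n = 0) \/ exists w, redw w /\ w <> [] /\ ftype w = l /\ ltype w = tau l n /\ ginv c * d n = prod w).
    { induction n as [|n IH]; [left; reflexivity|]. right. destruct IH as [E|[w [R [N [F [L Pw]]]]]].
      - subst n. exists [(l, A l)]. simpl. rewrite negb_involutive. destruct (GA l) as [G2 N2].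
        split; [auto|]. split; [discriminate|]. split; [reflexivity|]. split; [reflexivity|]. gs.
      - exists (w ++ [(tau l (S n), A (tau l (S n)))]). destruct (GA (tau l (S n))) as [G2 N2].
        split; [apply redw_snoc; auto; right; rewrite L; reflexivity|].
        split; [destruct w; discriminate|]. split; [rewrite ftype_app; auto|]. split; [apply ltype_app|].
        rewrite prod_app. simpl. rewrite <- Pw. gs. }
    intro n. unfold Cone. destruct (Inv n) as [E|[w [R [N [F [L Pw]]]]]].
    + subst n. left. simpl. gs. apply H1.
    + right. simpl. rewrite Pw. rewrite <- F. apply P_prod; auto.
Qed.

Lemma fixv v t a k : veq v (t, a) -> H (ginv a * k * a) -> veq (vact k v) v.
Proof.
  intros [E A] Hk. split; [reflexivity|]. simpl. simpl in E. rewrite E in *.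
  replace (ginv (k * snd v) * snd v) with ((ginv (snd v) * a) * ginv (ginv a * k * a) * ginv (ginv (snd v) * a)) by gs.
  apply GM; [apply GM|]; auto. apply HG, HV; auto. apply GV; auto.
Qed.

Lemma fix_half j k u n : Kset G G0 G1 j k -> is_ray u -> veq (u n) (negb j, e) -> veq (u (S n)) (j, e) ->
  cofinal (ray_act k u) u.
Proof.
  intros Kk Ru A0 B0.
  assert (Cl : forall i, exists a s, veq (u (n + i)) (s, a) /\ veq (u (S (n + i))) (negb s, a) /\
     ((s = negb j /\ H a) \/ exists w h, redw w /\ w <> [] /\ ftype w = j /\ ltype w = s /\ H h /\ a = prod w * h)).
  { induction i as [|i IH].
    - exists e, (negb j). rewrite Nat.add_0_r, negb_involutive. split; [auto|]. split; [auto|]. left; split; auto. apply H1.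
    - destruct IH as [a [s [Va [Vb W]]]].
      destruct (Ru (S (n + i))) as [[Ne [g [Ag Bg]]] _]. destruct (Ru (n + i)) as [_ NB].
      assert (F1 : fst (u (S (n + i))) = negb s) by (destruct Vb; auto).
      assert (F2 : fst (u (S (S (n + i)))) = s) by (rewrite F1 in Ne; destruct (fst (u (S (S (n + i))))), s; simpl in *; congruence).
      rewrite F1 in Ag. rewrite F2 in Bg.
      assert (Gz : Gj (negb s) (ginv a * g)) by (destruct (veq_trans _ _ _ (veq_sym _ _ Vb) Ag) as [_ Z]; exact Z).
      assert (Nz : ~ H (ginv a * g)).
      { intro Hz. apply NB. apply veq_trans with (s, g); auto. apply veq_trans with (s, a); [|apply veq_sym; auto].
        split; [reflexivity|]. simpl. replace (ginv g * a) with (ginv (ginv a * g)) by gs. apply HG, HV; auto. }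
      exists g, (negb s). rewrite Nat.add_succ_r, negb_involutive. split; [auto|]. split; [auto|]. right.
      destruct W as [[Es Ha]|[w [h [R [N [F [L [Hh Ea]]]]]]]].
      + subst s. rewrite negb_involutive in *. exists [(j, g)], e. simpl.
        assert (Gg : Gj j g) by (replace g with (a * (ginv a * g)) by gs; apply GM; auto; apply HG; auto).
        assert (Ng : ~ H g) by (intro X; apply Nz; apply HM; auto; apply HV; auto).
        split; [auto|]. split; [discriminate|]. split; [reflexivity|]. split; [reflexivity|]. split; [apply H1|]. gs.
      + exists (w ++ [(negb s, h * (ginv a * g))]), e.
        assert (Ghz : Gj (negb s) (h * (ginv a * g))) by (apply GM; auto; apply HG; auto).
        assert (Nhz : ~ H (h * (ginv a * g))) by (intro X; apply Nz; apply (HMl h); auto).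
        split; [apply redw_snoc; auto; right; rewrite L; reflexivity|].
        split; [destruct w; discriminate|]. split; [rewrite ftype_app; auto|]. split; [apply ltype_app|].
        split; [apply H1|]. rewrite prod_app. simpl. rewrite Ea. gs. }
  exists (S n), (S n). intro i. destruct (Cl i) as [a [s [Va [Vb W]]]].
  replace (i + S n) with (S (n + i)) by lia. unfold Defs.ray_act.
  apply (fixv _ (negb s) a); [exact Vb|]. apply (Kset_CH j); [exact Kk|].
  destruct W as [[Es Ha]|[w [h [R [N [F [L [Hh Ea]]]]]]]]; [left; auto|right].
  exists w. split; [auto|]. split; [auto|]. split; [auto|]. rewrite Ea. gs. exact Hh.
Qed.

Lemma iv_to_star : topologically_free G G0 G1 -> Kstar.
Proof.
  intros TF j x Kx. apply NNPP. intro Nx. apply (TF x Nx).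
  exists (Zset (negb j) e). split; [constructor|]. split.
  - destruct (canon_ray e j) as [y [Ry [Y0 [_ [Fy Gy]]]]]. exists y. split; auto.
    apply (Zset_self y 0); auto. { rewrite Y0. apply veq_refl. }
    pose proof (Gy 0) as T. rewrite Y0 in T. simpl in T. rewrite invg1, gmul1 in T.
    split. { rewrite Fy, Y0. reflexivity. } simpl. rewrite mulg1. apply GV. exact T.
  - intros z Rz [u [Ru [Cu [n [A B]]]]]. rewrite negb_involutive in B.
    pose proof (fix_half j x u n Kx Ru A B) as Fu.
    apply cof_trans with (ray_act x u); [apply cof_act; auto|]. apply cof_trans with u; auto. apply cof_sym; auto.
Qed.

Lemma TRANSLATE j b z : Gj (negb j) b -> ~ H b -> Zset (negb j) e z -> Zset j e (ray_act b z).
Proof.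
  intros Gb Nb Z. apply (Zset_act b) in Z. rewrite mulg1 in Z.
  destruct Z as [u [Ru [Cu [p [Ap Bp]]]]]. rewrite negb_involutive in Bp.
  assert (A' : veq (u p) (negb j, e)) by (apply veq_trans with (negb j, b); auto; apply veq_Gy; auto).
  exists (prep (j, e) u p). split.
  - apply prep_ray; auto.
    + apply adj_veq with (j, e) (negb j, e); [|apply veq_refl|apply veq_sym; auto].
      split; [destruct j; discriminate|]. exists e. split; apply veq_refl.
    + intro X. apply Nb. apply (GH (negb j)); auto. rewrite negb_involutive.
      assert (X2 : veq (j, b) (j, e)) by (apply veq_trans with (u (S p)); auto; apply veq_sym; auto).
      destruct X2 as [_ X2]. simpl in X2. rewrite mulg1 in X2. apply GVr; auto.
  - split; [apply cof_trans with u; auto; apply prep_cof|]. exists 0. simpl. split; [apply veq_refl|].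
    rewrite Nat.add_0_r. exact A'.
Qed.

Definition SF3 := strongly_faithful G (nat -> vertex G) is_ray cofinal ray_act.

Lemma iii_to_iv : SF3 -> topologically_free G G0 G1.
Proof.
  intros SF g Ng [U [GU [[x0 [R0 U0]] Fix]]].
  destruct (NB U GU x0 R0 U0) as [j [c [Z0 Sub]]].
  set (g' := ginv c * g * c).
  assert (Ng' : g' <> e) by (intro E; apply Ng; replace g with (c * g' * ginv c) by (unfold g'; gs); rewrite E; gs).
  assert (FX : forall x, is_ray x -> Zset j e x -> cofinal (ray_act g' x) x).
  { intros x Rx Zx. apply (Zset_act c) in Zx. rewrite mulg1 in Zx.
    pose proof (Fix _ (ray_act_ray c x Rx) (Sub _ Zx)) as Cf.
    apply (cof_act (ginv c)) in Cf. rewrite !ray_act_comp in Cf. rewrite gmulV, ray_act_e in Cf.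
    unfold g'. exact Cf. }
  destruct (idx2 (negb j)) as [b [Gb Nb]].
  assert (Ng2 : ginv b * g' * b <> e) by (intro E; apply Ng'; replace g' with (b * (ginv b * g' * b) * ginv b) by gs; rewrite E; gs).
  destruct (SF [g'; ginv b * g' * b]) as [z [Rz Nz]].
  { intros f [E|[E|[]]]; subst; auto. }
  assert (Cz : Zset j e z \/ Zset (negb j) e z) by (destruct (COV z Rz); destruct j; simpl; auto).
  destruct Cz as [Zz|Zz].
  - apply (Nz g' (or_introl eq_refl)). apply FX; auto.
  - apply (Nz (ginv b * g' * b) (or_intror (or_introl eq_refl))).
    pose proof (FX _ (ray_act_ray b z Rz) (TRANSLATE j b z Gb Nb Zz)) as Cf.
    apply (cof_act (ginv b)) in Cf. rewrite !ray_act_comp in Cf. rewrite gmulV, ray_act_e in Cf. exact Cf.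
Qed.

Lemma star_to_iii : Kstar -> SF3.
Proof.
  intros KS F NF0. destruct (KEY F KS NF0) as [c [l M]].
  destruct (canon_ray c l) as [x [Rx [X0 [Cx [Fx Gx]]]]]. exists x. split; auto.
  intros f If [m [k C]].
  pose proof (C 0) as C0. pose proof (C 1) as C1. simpl in C0, C1.
  destruct C0 as [E0 U0]. destruct C1 as [E1 U1]. simpl in *.
  set (u := ginv (f * snd (x m)) * snd (x k)) in U0.
  assert (Ef : fst (x (S m)) = fst (x (S k))) by (rewrite !Fx, E0; reflexivity).
  pose proof (Gx m) as Tp. pose proof (Gx k) as Tq. rewrite <- Ef in Tq.
  assert (Uσ : Gj (fst (x (S m))) u).
  { replace u with ((ginv (snd (x m)) * snd (x (S m))) * (ginv (f * snd (x (S m))) * snd (x (S k))) * ginv (ginv (snd (x k)) * snd (x (S k))))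
      by (unfold u; gs).
    apply GM; [apply GM|]; auto. apply GV; auto. }
  rewrite Fx in Uσ.
  assert (Hu : H u) by (apply (GH (fst (x m))); auto).
  apply (M f If (snd (x m)) (Cx m)). unfold Cone.
  replace (ginv c * (f * snd (x m))) with ((ginv c * snd (x k)) * ginv u) by (unfold u; gs).
  apply CH_Hr; [apply HV; auto|]. apply (Cx k).
Qed.

Definition SF2 := strongly_faithful G G (fun _ : G => True) (fun a b => H (ginv a * b)) (fun g a => g * a).

Lemma star_to_ii : Kstar -> SF2.
Proof.
  intros KS F NF0. destruct (KEY F KS NF0) as [c [l M]]. exists c. split; [exact I|].
  intros f If Hf. apply (M f If c (Cone_self c l)). unfold Cone. left.
  replace (ginv c * (f * c)) with (ginv (ginv (f * c) * c)) by gs. apply HV; auto.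
Qed.

Lemma ii_to_star : SF2 -> Kstar.
Proof.
  intros SF j x Kx. apply NNPP. intro Nx.
  destruct (idx2 j) as [x0 [Gx0 Nx0]].
  assert (N2 : ginv x0 * x * x0 <> e) by (intro E; apply Nx; replace x with (x0 * (ginv x0 * x * x0) * ginv x0) by gs; rewrite E; gs).
  destruct (SF [x; ginv x0 * x * x0]) as [a [_ Ha]]. { intros f [E|[E|[]]]; subst; auto. }
  destruct (cov2 j a) as [Ca|Pa].
  - apply (Ha x (or_introl eq_refl)). replace (ginv (x * a) * a) with (ginv (ginv a * x * a)) by gs.
    apply HV. apply (Kset_CH j); auto.
  - assert (C2 : CH j (x0 * a)).
    { right. replace (x0 * a) with (prod [(j,x0)] * a) by (simpl; gs). refine (CONC' [(j, x0)] a _ _ _); [simpl; auto|discriminate|]. unfold ltype. simpl. right. exact Pa. }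
    apply (Ha (ginv x0 * x * x0) (or_intror (or_introl eq_refl))).
    replace (ginv (ginv x0 * x * x0 * a) * a) with (ginv (ginv (x0 * a) * x * (x0 * a))) by gs.
    apply HV. apply (Kset_CH j); auto.
Qed.

Lemma i_to_star : (forall x, intG G G0 G1 x -> x = e) -> Kstar.
Proof. intros I j x Kx. apply I. intros N _ HN. apply HN. destruct j; auto. Qed.

Lemma star_to_i : Kstar -> forall x, intG G G0 G1 x -> x = e.
Proof.
  intros KS x Ix. apply (Ix (fun z => z = e)).
  - split; [split; [reflexivity|split]|].
    + intros a b -> ->. gs.
    + intros a ->. apply invg1.
    + intros g a ->. gs.
  - intros y [K|K]; eapply KS; eauto.
Qed.
End Amal.

Theorem proposition5p3 (G : Group) (G0 G1 : G -> Prop) :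
  is_amalgam G0 G1 -> nondegenerate G G0 G1 ->
  let TFAE_i := forall x, intG G G0 G1 x -> x = gone in
  let TFAE_ii := strongly_faithful G G (fun _ : G => True)
                   (fun a b => Hsub G G0 G1 (gmul (ginv a) b)) (fun g a => gmul g a) in
  let TFAE_iii := strongly_faithful G (nat -> vertex G) (is_ray G G0 G1)
                   (cofinal G G0 G1) (ray_act G) in
  let TFAE_iv := topologically_free G G0 G1 in
  (TFAE_i <-> TFAE_ii) /\ (TFAE_ii <-> TFAE_iii) /\ (TFAE_iii <-> TFAE_iv).
Proof.
  intros Ham Hnd TFAE_i TFAE_ii TFAE_iii TFAE_iv.
  pose proof (i_to_star G G0 G1) as A1.
  pose proof (star_to_i G G0 G1) as A2.
  pose proof (ii_to_star G G0 G1 Ham Hnd) as A3.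
  pose proof (star_to_ii G G0 G1 Ham Hnd) as A4.
  pose proof (star_to_iii G G0 G1 Ham Hnd) as A5.
  pose proof (iii_to_iv G G0 G1 Ham Hnd) as A6.
  pose proof (iv_to_star G G0 G1 Ham Hnd) as A7.
  unfold SF2, SF3 in *.
  split; [|split]; split; intro X.
  - exact (A4 (A1 X)).
  - exact (A2 (A3 X)).
  - exact (A5 (A3 X)).
  - exact (A4 (A7 (A6 X))).
  - exact (A6 X).
  - exact (A5 (A7 X)).
Qed.
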